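(* Let $k\ge 2$. Every $k$-tree $G$ satisfies $\vec{\chi}(G)\le k$.
   Context: Digraphs have no loops and no parallel arcs, but may contain digons. $\vec{\chi}(G)$ is the dichromatic number (minimum number of colours in a colouring of $V(G)$ with no monochromatic directed cycle). $\Delta_{max}(G)=\max_v\max(d^+(v),d^-(v))$. $\mathcal B_1$ is the set of directed cycles (including digons), $\mathcal B_2$ the set of symmetric cycles of odd length (each edge of an odd undirected cycle replaced by a digon), and for $j\ge 3$, $\mathcal B_j=\{\overleftrightarrow K_{j+1}\}$ (symmetric complete graph on $j+1$ vertices). A digraph $G$ is a direct composition of $G_1,G_2$ on $v_1\in V(G_1)$, $v_2\in V(G_2)$ if obtained from their disjoint union by adding exactly one arc between $v_1$ and $v_2$. $G$ is a cyclic composition of $G_1,\dots,G_\ell$ ($\ell\ge2$) on $v_i\in V(G_i)$ if obtained from their disjoint union by adding arcs $v_iv_{i+1}$ ($1\le i\le \ell-1$) and $v_\ell v_1$. A $k$-tree is a digraph $G$ with $\Delta_{max}(G)\le k$ that can be built by: every member of $\mathcal B_{k-1}$ is a $k$-tree; a direct or cyclic composition of $k$-trees is a $k$-tree. *)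

(* Defs.v *)
From Stdlib Require Import ClassicalEpsilon.
From mathcomp Require Import all_boot.
Set Implicit Arguments.
Unset Strict Implicit.
Unset Printing Implicit Defensive.

(** Digraphs: a finite vertex type with an arc relation (no parallel arcs
    automatically; digons allowed).  Looplessness is a separate condition. *)

Section Basics.
Variable T : finType.
Implicit Types (A : rel T).

Definition loopless A := forall x, ~~ A x x.

Definition outdeg A v := #|[pred y | A v y]|.
Definition indeg A v := #|[pred y | A y v]|.
Definition Delta_max A := \max_(v : T) maxn (outdeg A v) (indeg A v).

Definition dicycle A (s : seq T) := [/\ s != [::], uniq s & cycle A s].

Definition acyclic_colouring A m (c : T -> 'I_m) :=
  forall s, dicycle A s -> ~ {in s &, forall x y, c x = c y}.

Definition colourable A m := exists c : T -> 'I_m, acyclic_colouring A c.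

Definition colourableb A m : bool :=
  if excluded_middle_informative (colourable A m) then true else false.

Lemma colourable_card A : loopless A -> colourableb A #|T|.
Proof.
move=> Hl; rewrite /colourableb; case: excluded_middle_informative => // []; case.
exists (@enum_rank T) => s [ne u cy] mono.
case: s ne u cy mono => [//|x [|y s]] _ u cy mono.
  by move: cy; rewrite /= andbT (negbTE (Hl x)).
have xy : x = y.
  by apply: enum_rank_inj; apply: mono; rewrite !inE ?eqxx ?orbT.
by move: u; rewrite /= inE xy eqxx.
Qed.

End Basics.

Record digraph := Digraph {
  vert : finType;
  darc : rel vert;
  arc_loopless : loopless darc
}.
Arguments darc : clear implicits.

Lemma digraph_colourable (G : digraph) : exists m, colourableb (darc G) m.
Proof. by exists #|vert G|; apply: colourable_card; exact: arc_loopless. Qed.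

Definition dichromatic (G : digraph) : nat := ex_minn (digraph_colourable G).

Definition isomorphic (T1 T2 : finType) (A1 : rel T1) (A2 : rel T2) :=
  exists f : T1 -> T2, bijective f /\ forall x y, A2 (f x) (f y) = A1 x y.

(** Representatives on 'I_n of the members of B_j. *)
Definition succ_mod n (i j : 'I_n) := val j == (val i).+1 %% n.
(* directed cycle of length n (n >= 2; n = 2 is the digon) *)
Definition dicycle_graph n : rel 'I_n := fun i j => succ_mod i j.
Definition symcycle_graph n : rel 'I_n := fun i j => succ_mod i j || succ_mod j i.
Definition symcomplete_graph n : rel 'I_n := fun i j => i != j.

Arguments dicycle_graph : clear implicits.
Arguments symcycle_graph : clear implicits.
Arguments symcomplete_graph : clear implicits.

Definition in_B (j : nat) (T : finType) (A : rel T) : Prop :=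
  if j == 1 then exists n, 2 <= n /\ isomorphic (dicycle_graph n) A
  else if j == 2 then exists n, [/\ 3 <= n, odd n & isomorphic (symcycle_graph n) A]
  else 3 <= j /\ isomorphic (symcomplete_graph j.+1) A.

Definition direct_comp (T1 T2 : finType) (A1 : rel T1) (A2 : rel T2)
    (v1 : T1) (v2 : T2) (b : bool) : rel (T1 + T2)%type :=
  fun x y =>
    match x, y with
    | inl a, inl a' => A1 a a'
    | inr a, inr a' => A2 a a'
    | inl a, inr a' => b && (a == v1) && (a' == v2)
    | inr a, inl a' => ~~ b && (a == v2) && (a' == v1)
    end.

Definition cyclic_comp (l : nat) (T : 'I_l -> finType) (A : forall i, rel (T i))
    (v : forall i, T i) : rel {i : 'I_l & T i} :=
  fun x y =>
    ((tag x == tag y) && A (tag x) (tagged x) (tagged_as x y))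
    || [exists i : 'I_l, exists j : 'I_l,
          [&& succ_mod i j, x == Tagged T (v i) & y == Tagged T (v j)]].

Inductive ktree (k : nat) : forall (T : finType), rel T -> Prop :=
  | ktree_base (T : finType) (A : rel T) :
      in_B k.-1 A -> Delta_max A <= k -> ktree k A
  | ktree_direct (T1 T2 : finType) (A1 : rel T1) (A2 : rel T2) v1 v2 b :
      ktree k A1 -> ktree k A2 ->
      Delta_max (direct_comp A1 A2 v1 v2 b) <= k ->
      ktree k (direct_comp A1 A2 v1 v2 b)
  | ktree_cyclic (l : nat) (T : 'I_l -> finType) (A : forall i, rel (T i))
      (v : forall i, T i) :
      2 <= l -> (forall i, ktree k (A i)) ->
      Delta_max (cyclic_comp A v) <= k ->
      ktree k (cyclic_comp A v)
  | ktree_iso (T1 T2 : finType) (A1 : rel T1) (A2 : rel T2) :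
      ktree k A1 -> isomorphic A1 A2 -> ktree k A2.

(* Main.v *)
Require Import Defs.
From mathcomp Require Import all_boot zify.
From Stdlib Require Import ClassicalEpsilon.
Set Implicit Arguments.
Unset Strict Implicit.
Unset Printing Implicit Defensive.

Lemma path_map_sub (T1 T2 : eqType) (e : rel T1) (e' : rel T2) (g : T1 -> T2) x p :
  {in x :: p &, forall a b, e a b -> e' (g a) (g b)} ->
  path e x p -> path e' (g x) (map g p).
Proof.
elim: p x => [//|y p IH] x H /= /andP [exy pp].
apply/andP; split.
  by apply: H => //; rewrite !inE eqxx ?orbT.
apply: IH pp => a b Ha Hb; apply: H; rewrite inE ?Ha ?Hb orbT //.
Qed.

Lemma dicycle_pull (T T1 : finType) (A : rel T) (A1 : rel T1) (g : T -> T1) s :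
  {in s &, injective g} -> {in s &, forall a b, A a b -> A1 (g a) (g b)} ->
  dicycle A s -> dicycle A1 (map g s).
Proof.
move=> inj hom [ne u cy]; split.
- by case: s ne {inj hom u cy}.
- by rewrite map_inj_in_uniq.
case: s ne inj hom u cy => [//|x s] _ inj hom _ cy.
rewrite /= -map_rcons; apply: path_map_sub cy => a b Ha Hb.
apply: hom.
  by move: Ha; rewrite inE mem_rcons inE orbA orbb -inE.
by move: Hb; rewrite inE mem_rcons inE orbA orbb -inE.
Qed.

Lemma acyclic_pull (T T1 : finType) (A : rel T) (A1 : rel T1) m (c1 : T1 -> 'I_m)
  (c : T -> 'I_m) (g : T -> T1) s :
  acyclic_colouring A1 c1 ->
  {in s &, injective g} -> {in s &, forall a b, A a b -> A1 (g a) (g b)} ->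
  {in s, forall x, c1 (g x) = c x} ->
  dicycle A s -> ~ {in s &, forall x y, c x = c y}.
Proof.
move=> ac inj hom col dc mono.
apply: (ac _ (dicycle_pull inj hom dc)).
move=> x' y' /mapP [x xs ->] /mapP [y ys ->].
by rewrite !col //; apply: mono.
Qed.

Lemma iso_colourable (T1 T2 : finType) (A1 : rel T1) (A2 : rel T2) m :
  isomorphic A1 A2 -> colourable A1 m -> colourable A2 m.
Proof.
move=> [f [[g fK gK] hom]] [c1 ac].
exists (fun x => c1 (g x)) => s dc.
apply: (acyclic_pull (A := A2) (g := g) ac) => //.
- by move=> a b _ _ E; rewrite -(gK a) E gK.
- by move=> a b _ _; rewrite -hom !gK.
Qed.

Lemma colourable_widen (T : finType) (A : rel T) m m' :
  m <= m' -> colourable A m -> colourable A m'.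
Proof.
move=> le [c ac]; exists (fun x => widen_ord le (c x)) => s dc mono.
apply: (ac s dc) => x y xs ys; apply: val_inj.
by have := mono x y xs ys => /(f_equal val).
Qed.

Lemma colourable_compose (T : finType) (A : rel T) m (c : T -> 'I_m) (h : 'I_m -> 'I_m) :
  acyclic_colouring A c -> injective h -> acyclic_colouring A (fun x => h (c x)).
Proof.
move=> ac hi s dc mono; apply: (ac s dc) => x y xs ys; apply: hi; exact: mono.
Qed.

Lemma proper_acyclic (T : finType) (A : rel T) m (c : T -> 'I_m) :
  (forall x y, A x y -> c x != c y) -> acyclic_colouring A c.
Proof.
move=> pr s [ne u cy] mono.
case: s ne u cy mono => [//|x s] _ u cy mono.
have xs : x \in x :: s by rewrite inE eqxx.
have := pr _ _ (next_cycle cy xs).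
by rewrite (mono x (next (x :: s) x)) ?eqxx // mem_next.
Qed.

Lemma path_exit (T : eqType) (e : rel T) (P : pred T) x p :
  path e x p -> P x -> ~~ all P p ->
  exists a b, [/\ a \in x :: p, b \in p, e a b, P a & ~~ P b].
Proof.
elim: p x => [//|y p IH] x /= /andP [exy pp] Px.
case Py: (P y) => /= nall.
  have [a [b [H1 H2 H3 H4 H5]]] := IH y pp Py nall.
  by exists a, b; split => //; rewrite in_cons ?H1 ?H2 orbT.
by exists x, y; rewrite !inE !eqxx Py; split.
Qed.

Lemma cycle_exit (T : finType) (A : rel T) (P : pred T) s x y :
  dicycle A s -> x \in s -> y \in s -> P x -> ~~ P y ->
  exists a b, [/\ a \in s, b \in s, A a b, P a & ~~ P b].
Proof.
move=> [_ _ cy] xs ys Px Py.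
case: (rot_to xs) => i s' Hr.
have cy' : cycle A (x :: s') by rewrite -Hr rot_cycle.
have ys' : y \in x :: s' by rewrite -Hr mem_rot.
have nall : ~~ all P (rcons s' x).
  apply/allPn; exists y => //.
  rewrite mem_rcons; move: ys'; rewrite !inE; case/orP => [/eqP E|->]; last by rewrite orbT.
  by move: Py; rewrite E Px.
have [a [b [H1 H2 H3 H4 H5]]] := path_exit cy' Px nall.
have sub : forall z, z \in x :: rcons s' x -> z \in s.
  move=> z; rewrite -(mem_rot i s) Hr !inE mem_rcons inE.
  by case/orP => [->|/orP [->|->]]; rewrite ?orbT.
by exists a, b; split => //; apply: sub; rewrite // inE H2 orbT.
Qed.

Lemma succ_modE n (i j : 'I_n) :
  succ_mod i j -> val j = if val i == n.-1 then 0 else (val i).+1.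
Proof.
rewrite /succ_mod => /eqP ->; have := ltn_ord i.
case: eqP => [->|ne] lt.
  by rewrite prednK ?modnn // (leq_ltn_trans _ lt).
rewrite modn_small //; case: n i lt ne {j} => [[]//|n] i /= lt ne.
by rewrite ltn_neqAle; apply/andP; split; [apply/eqP=> [[]] | ].
Qed.

Lemma path_lt n x (p : seq 'I_n) :
  path (fun a b : 'I_n => val a < val b) x p -> p = [::] \/ val x < val (last x p).
Proof.
elim: p x => [|y p IH] x /=; first by left.
move=> /andP [xy pp]; right; case: (IH y pp) => [->//|H].
exact: ltn_trans H.
Qed.

Lemma dicycle_graph_col n : 2 <= n -> colourable (dicycle_graph n) 2.
Proof.
move=> n2.
exists (fun i : 'I_n => if val i == n.-1 then (ord_max : 'I_2) else ord0).
move=> s [ne u cy] mono.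
case: s ne u cy mono => [//|x s] _ u cy mono.
have xs : x \in x :: s by rewrite inE eqxx.
have Hc : forall y, y \in x :: s -> (val y == n.-1) = (val x == n.-1).
  move=> y ys; have := mono y x ys xs.
  by do 2 case: (_ == n.-1).
case Ex: (val x == n.-1).
  case: s u cy Hc {mono xs} => [|y s] u cy Hc.
    move: cy => /= /andP [/succ_modE]; rewrite Ex => H _.
    move/eqP: Ex; rewrite H; lia.
  have Ey := Hc y; rewrite Ex inE inE eqxx orbT in Ey.
  have exy : x = y by apply: val_inj; rewrite (eqP Ex) (eqP (Ey isT)).
  by move: u; rewrite /= inE exy eqxx.
have cy' : path (fun a b : 'I_n => val a < val b) x (rcons s x).
  move: cy => /= cy; apply: (sub_in_path (P := mem (x :: s))) cy.
    move=> a b ain _ /succ_modE ->; rewrite Hc // Ex //.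
  by apply/allP => z; rewrite in_cons mem_rcons in_cons orbA orbb.
case: (path_lt cy'); first by case: s {u Hc cy cy' mono xs}.
by rewrite last_rcons ltnn.
Qed.

Lemma symcomplete_col m : colourable (symcomplete_graph m) m.
Proof. by exists id; apply: proper_acyclic. Qed.

Lemma symcycle_col n : 3 <= n -> odd n -> colourable (symcycle_graph n) 3.
Proof.
move=> n3 on.
pose f (i : 'I_n) : nat := if val i == n.-1 then 2 else odd (val i).
have f3 : forall i, f i < 3 by move=> i; rewrite /f; case: (_ == _) => //; case: odd.
exists (fun i => inord (f i)); apply: proper_acyclic.
have key : forall i j : 'I_n, succ_mod i j -> f i != f j.
  move=> i j /succ_modE E; rewrite /f E.
  have := ltn_ord i; have := ltn_ord j.
  case: (eqVneq (val i) n.-1) => Ei /=.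
    have hn : 0 < n.-1 by rewrite -ltnS prednK // (leq_trans _ n3).
    by move=> _ _; case: (eqVneq 0 n.-1) => H //; rewrite -H in hn.
  by move=> _ _; case: (eqVneq (val i).+1 n.-1) => _ /=; case: odd.
move=> i j /orP [H|H]; rewrite -(inj_eq val_inj) /= !inordK //.
  exact: key.
rewrite eq_sym; exact: key.
Qed.

Lemma base_col k (T : finType) (A : rel T) : 2 <= k -> in_B k.-1 A -> colourable A k.
Proof.
case: k => [//|[//|k]] _; rewrite /in_B /=.
case: k => [|[|k]] /=.
- move=> [n [n2 iso]]; exact: iso_colourable iso (dicycle_graph_col n2).
- move=> [n [n3 on iso]]; exact: iso_colourable iso (symcycle_col n3 on).
- move=> [_ iso]; exact: iso_colourable iso (symcomplete_col _).
Qed.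

Definition is_inl (T1 T2 : Type) (x : T1 + T2) := if x is inl _ then true else false.

Lemma direct_col (T1 T2 : finType) (A1 : rel T1) (A2 : rel T2) v1 v2 b m :
  colourable A1 m -> colourable A2 m -> colourable (direct_comp A1 A2 v1 v2 b) m.
Proof.
move=> [c1 ac1] [c2 ac2].
exists (fun x => match x with inl a => c1 a | inr a => c2 a end) => s dc mono.
case: (boolP (all (@is_inl T1 T2) s)) => [allL|/allPn [y ys Py]].
  have [x0 [s' Es]] : exists x0 s', s = x0 :: s' by case: dc => ne _ _; move: ne; case: (s) => // x s' _; exists x, s'.
  have := allP allL x0; rewrite Es inE eqxx => /(_ isT).
  case: x0 Es => [a0|//] Es _.
  apply: (acyclic_pull (A1 := A1)
    (g := fun x => match x with inl a => a | inr _ => a0 end) ac1 _ _ _ dc mono).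
  - move=> x y xs ys; have := allP allL x xs; have := allP allL y ys.
    by case: x {xs} => // a; case: y {ys} => // a' _ _ ->.
  - move=> x y xs ys; have := allP allL x xs; have := allP allL y ys.
    by case: x {xs} => // a; case: y {ys} => // a'.
  - move=> x xs; have := allP allL x xs; by case: x {xs}.
case: (boolP (all (fun x => ~~ @is_inl T1 T2 x) s)) => [allR|/allPn [x xs Px]].
  case: y ys Py => [//|a0] ys _.
  apply: (acyclic_pull (A1 := A2)
    (g := fun x => match x with inr a => a | inl _ => a0 end) ac2 _ _ _ dc mono).
  - move=> p q ps qs; have := allP allR p ps; have := allP allR q qs.
    by case: p {ps} => // a; case: q {qs} => // a' _ _ ->.
  - move=> p q ps qs; have := allP allR p ps; have := allP allR q qs.
    by case: p {ps} => // a; case: q {qs} => // a'.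
  - move=> p ps; have := allP allR p ps; by case: p {ps}.
move: Px; rewrite negbK => Px.
have [a1 [b1 [_ _ e1 P1 Q1]]] := cycle_exit dc xs ys Px Py.
have [a2 [b2 [_ _ e2 P2 Q2]]] :=
  cycle_exit (P := fun x => ~~ @is_inl T1 T2 x) dc ys xs Py (introT negPn Px). 
case: a1 b1 e1 P1 Q1 => [a1|//] [//|b1] /= /andP [/andP [bb _] _] _ _.
case: a2 b2 e2 P2 Q2 => [//|a2] [b2|//] /= /andP [/andP [bb' _] _] _ _.
by rewrite bb in bb'.
Qed.

Lemma tagged_as_eq (I : eqType) (T : I -> Type) (u x : {i : I & T i}) :
  tag x = tag u -> Tagged T (tagged_as u x) = x.
Proof. by case: u x => [i a] [j b] /= E; subst j; rewrite tagged_asE. Qed.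

Lemma succ_mod_irr l (i : 'I_l) : 2 <= l -> ~~ succ_mod i i.
Proof.
move=> l2; apply/negP => /succ_modE.
have := ltn_ord i; case: eqP => [E _ H|_ _ H]; lia.
Qed.

Definition swap m (a b : 'I_m) (x : 'I_m) := if x == a then b else if x == b then a else x.

Lemma swap_inj m (a b : 'I_m) : injective (swap a b).
Proof.
move=> x y; rewrite /swap; repeat case: eqP; congruence.
Qed.

Lemma swapL m (a b : 'I_m) : swap a b a = b.
Proof. by rewrite /swap eqxx. Qed.

Lemma cyc_hom l (T : 'I_l -> finType) (A : forall i, rel (T i)) (v : forall i, T i) i
  (a b : T i) : 2 <= l -> cyclic_comp A v (existT _ i a) (existT _ i b) -> A i a b.
Proof.
move=> l2; rewrite /cyclic_comp /= eqxx (@tagged_asE _ T (existT _ i a) b) /=.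
case/orP => [//|]; case/existsP => i1; case/existsP => j1.
case/and3P => sij /eqP /(f_equal tag) /= E1 /eqP /(f_equal tag) /= E2.
by move: sij; rewrite -E1 -E2 (negbTE (succ_mod_irr _ l2)).
Qed.

Lemma cyc_hom2 l (T : 'I_l -> finType) (A : forall i, rel (T i)) (v : forall i, T i)
  (u x y : {i : 'I_l & T i}) : 2 <= l -> tag x = tag u -> tag y = tag u ->
  cyclic_comp A v x y -> A (tag u) (tagged_as u x) (tagged_as u y).
Proof.
case: u x y => [i c] [j a] [j' b] l2 /= E E'; subst j j'.
rewrite (@tagged_asE _ T (existT _ i c) a) (@tagged_asE _ T (existT _ i c) b).
exact: cyc_hom.
Qed.

Lemma tag_fun_eq (I : eqType) (T : I -> Type) R (F : forall i, T i -> R)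
  (u x : {i : I & T i}) : tag x = tag u -> F (tag u) (tagged_as u x) = F (tag x) (tagged x).
Proof. by case: u x => [i c] [j a] /= E; subst j; rewrite (@tagged_asE _ T (existT _ i c) a). Qed.

Lemma cyclic_col k l (T : 'I_l -> finType) (A : forall i, rel (T i)) (v : forall i, T i) :
  2 <= l -> (forall i, colourable (A i) k.+2) -> colourable (cyclic_comp A v) k.+2.
Proof.
move=> l2 H.
have [cc acc] : exists cc : forall i, T i -> 'I_k.+2, forall i, acyclic_colouring (A i) (cc i).
  exists (fun i => proj1_sig (constructive_indefinite_description _ (H i))).
  by move=> i; case: constructive_indefinite_description.
pose one : 'I_k.+2 := Ordinal (isT : 1 < k.+2).
pose t (i : 'I_l) : 'I_k.+2 := if val i == 0 then one else ord0.
pose d i x := swap (cc i (v i)) (t i) (cc i x).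
have dac : forall i, acyclic_colouring (A i) (d i).
  by move=> i; apply: colourable_compose (acc i) (@swap_inj _ _ _).
have dv : forall i, d i (v i) = t i by move=> i; rewrite /d swapL.
exists (fun x => d (tag x) (tagged x)) => s dc mono.
have [x0 [s' Es]] : exists x0 s', s = x0 :: s'.
  by case: dc => ne _ _; move: ne; case: (s) => // x s' _; exists x, s'.
have x0s : x0 \in s by rewrite Es inE eqxx.
case: (boolP (all (fun x => tag x == tag x0) s)) => [allT|nallT].
  have tg : forall x, x \in s -> tag x = tag x0 by move=> x xs; apply/eqP/(allP allT).
  apply: (acyclic_pull (A1 := A (tag x0)) (g := fun x => tagged_as x0 x) (dac (tag x0))
     _ _ _ dc mono).
  - move=> x y xs ys E.
    by rewrite -(tagged_as_eq (tg x xs)) -(tagged_as_eq (tg y ys)) E.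
  - by move=> x y xs ys; apply: cyc_hom2 => //; apply: tg.
  - by move=> x xs; apply: tag_fun_eq; apply: tg.
have step : forall i, (exists2 x, x \in s & tag x = i) ->
    Tagged T (v i) \in s /\ exists j, succ_mod i j /\ Tagged T (v j) \in s.
  move=> i [x xs tx].
  have [w ws tw] : exists2 w, w \in s & tag w != i.
    apply/hasP; apply: contraR nallT => /hasPn hn; apply/allP => z zs.
    have := hn z zs; have := hn x0 x0s; rewrite !negbK => /eqP -> /eqP ->.
    by [].
  have [a [b [ain bin eab Pa Pb]]] :=
    cycle_exit (P := fun z => tag z == i) dc xs ws (introT eqP tx) tw.
  move: eab; rewrite /cyclic_comp; case/orP.
    by case/andP => /eqP E; move: Pb; rewrite -E Pa.
  case/existsP => i1 /existsP [j1] /and3P [sij /eqP Ea /eqP Eb].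
  have E1 : i1 = i by move: Pa; rewrite Ea => /eqP.
  subst i1 a b; split => //; exists j1; split => //.
have all_tags : forall m, exists2 x, x \in s & val (tag x) = (val (tag x0) + m) %% l.
  elim => [|m [x xs Ex]].
    by apply: (ex_intro2 _ _ x0) => //; rewrite addn0 modn_small //; apply: ltn_ord.
  have [_ [j [sj js]]] := step (tag x) (ex_intro2 _ _ x xs erefl).
  apply: (ex_intro2 _ _ (Tagged T (v j))) => //.
  by rewrite (eqP sj) Ex -(addn1 ((tag x0 + m) %% l)) modnDml -addnA addn1.
have vin : forall i, Tagged T (v i) \in s.
  move=> i; apply: (proj1 (step i _)).
  have [x xs Ex] := all_tags ((l - val (tag x0)) + val i).
  apply: (ex_intro2 _ _ x) => //; apply: val_inj; rewrite Ex addnA subnKC.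
    by rewrite modnDl modn_small //; apply: ltn_ord.
  exact: ltnW (ltn_ord _).
pose i0 : 'I_l := Ordinal (leq_trans (isT : 1 <= 2) l2).
pose i1 : 'I_l := Ordinal l2.
have := mono (Tagged T (v i0)) (Tagged T (v i1)) (vin i0) (vin i1).
by rewrite /= !dv /t /= => /(f_equal val).
Qed.

Lemma ktree_col k (T : finType) (A : rel T) : 2 <= k -> ktree k A -> colourable A k.
Proof.
case: k => [|[|k]] // _ H.
elim: H => {T A}.
- by move=> T A HB _; apply: base_col.
- by move=> T1 T2 A1 A2 v1 v2 b _ IH1 _ IH2 _; apply: direct_col.
- by move=> l T A v l2 _ IH _; apply: cyclic_col.
- by move=> T1 T2 A1 A2 _ IH iso; apply: iso_colourable iso IH.
Qed.

Theorem mainTheorem6 (k : nat) (G : digraph) :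
  2 <= k -> ktree k (darc G) -> dichromatic G <= k.
Proof.
move=> k2 H; rewrite /dichromatic; case: ex_minnP => m _; apply.
rewrite /colourableb; case: excluded_middle_informative => // [].
by case; apply: ktree_col.
Qed.
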